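(* Define $A_n^r(q)$ for integers $n,r\ge 0$ by $A_0^0(q)=1$, $A_0^r(q)=0$ for $r\ge1$, $A_{n+1}^0(q)=1$ for $n\ge 0$, and for $n,r\ge 0$ $$A_{n+1}^{r+1}(q)=q^{r+1}A_n^{r+1}(q)+(q^{n-r}-q^r)A_n^r(q).$$ Then for all integers $n,r\ge 0$, $$A_n^r(q)=\mathrm{CT}_w\left[\frac{(1-w)(1+w)^n q^{r(n-r)}}{w^r}\sum_{i=0}^{\infty}(-1)^i q^{-(i+1)i/2-i(n-2r)}\binom{i+n-2r}{i}_q w^i\right].$$
   Context: For a formal Laurent series $P(w)$ (with coefficients Laurent polynomials in $q$), $\mathrm{CT}_w P(w)$ denotes the coefficient of $w^0$. The $q$-binomial coefficient is $\binom{m}{k}_q=\frac{(1-q^m)(1-q^{m-1})\cdots(1-q^{m-k+1})}{(1-q)(1-q^2)\cdots(1-q^k)}$ when $0\le k\le m$ (integers), and $\binom{m}{k}_q=0$ otherwise (in particular when $m<k$ or $m<0$). *)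

(* Defs.v *)
From HB Require Import structures.
From mathcomp Require Import all_boot all_order all_algebra.
From mathcomp Require Import fraction.
Set Implicit Arguments. Unset Strict Implicit. Unset Printing Implicit Defensive.
Import Order.TTheory GRing.Theory Num.Theory.
Local Open Scope ring_scope.

(* The field Q(q) of rational functions in q; Laurent polynomials in q
   (with integer coefficients) embed injectively into it. *)
Definition Fq := {fraction {poly rat}}.
Definition q : Fq := @tofrac _ ('X : {poly rat}).

Definition qbinom (m : int) (k : nat) : Fq :=
  match m with
  | Posz m' => if (k <= m')%N then
      (\prod_(j < k) (1 - q ^+ (m' - j)%N)) / (\prod_(j < k) (1 - q ^+ j.+1))
      else 0
  | Negz _ => 0
  end.

Fixpoint A (n r : nat) : Fq :=
  match n, r with
  | 0%N, 0%N => 1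
  | 0%N, _.+1 => 0
  | _.+1, 0%N => 1
  | n'.+1, r'.+1 =>
      q ^+ r'.+1 * A n' r'.+1 + (q ^ (n'%:Z - r'%:Z) - q ^+ r') * A n' r'
  end.

(* Formal Laurent series in w with coefficients in Fq, whose support is bounded
   below: LS s f stands for w^(-s) * \sum_{k>=0} f k w^k. *)
Record lseries := LS { lsh : nat; lcoef : nat -> Fq }.

Definition lmul (a b : lseries) : lseries :=
  LS (lsh a + lsh b)
     (fun k => \sum_(j < k.+1) lcoef a j * lcoef b (k - j)).

Definition lpoly (p : {poly Fq}) : lseries := LS 0 (fun k => p`_k).
Definition lpower (g : nat -> Fq) : lseries := LS 0 g.
Definition lconst (c : Fq) : lseries := LS 0 (fun k => if k == 0%N then c else 0).
Definition lwinv (r : nat) : lseries := LS r (fun k => if k == 0%N then 1 else 0).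

Definition CT (P : lseries) : Fq := lcoef P (lsh P).

(* Main.v *)
Require Import Defs.
From HB Require Import structures.
From mathcomp Require Import all_boot all_order all_algebra.
From mathcomp Require Import fraction.
From mathcomp Require Import zify ring lra.
Import Order.TTheory GRing.Theory Num.Theory.
Local Open Scope ring_scope.

Lemma q_neq0 : q != 0.
Proof. by rewrite /q tofrac_eq0 polyX_eq0. Qed.

Lemma onemq_neq0 j : (0 < j)%N -> 1 - q ^+ j != 0.
Proof.
move=> j0; rewrite /q -rmorphXn -(rmorph1 (@tofrac _)) -rmorphB tofrac_eq0.
apply/eqP => /(congr1 (fun p : {poly rat} => p`_0)).
by rewrite coefB coef1 coefXn coef0; case: j j0 => // j _ /=.
Qed.

Lemma den_neq0 k : \prod_(j < k) (1 - q ^+ j.+1) != 0.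
Proof. by rewrite prodf_seq_neq0; apply/allP => j _; apply: onemq_neq0. Qed.

Lemma qbinom_neg (z : int) (i : nat) : z < 0 -> qbinom (i%:Z + z) i = 0.
Proof.
move=> z0; case E: (i%:Z + z) => [m|m] //=.
by rewrite ifN //; apply/negP => H; lia.
Qed.

Lemma qbinomP (N k : nat) : qbinom N k =
  if (k <= N)%N then (\prod_(j < k) (1 - q ^+ (N - j)%N)) / (\prod_(j < k) (1 - q ^+ j.+1)) else 0.
Proof. by []. Qed.

Lemma qbinom_nn (k : nat) : qbinom k%:Z k = 1.
Proof.
rewrite qbinomP leqnn.
rewrite (reindex_inj rev_ord_inj) /=.
under eq_bigr => j _ do rewrite subKn //.
by rewrite divff // den_neq0.
Qed.

Lemma qbinom0 N : qbinom (Posz N) 0 = 1.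
Proof. by rewrite qbinomP leq0n !big_ord0 divr1. Qed.

Lemma genR1 (F : fieldType) (U D a b : F) : a != 0 -> D != 0 ->
  U * b / (D * a) * a = U / D * b.
Proof. by move=> ha hD; field; rewrite ha hD. Qed.

Lemma genP (F : fieldType) (U D x y : F) : 1 - y != 0 -> D != 0 ->
  (1 - x * y) * U / (D * (1 - y)) = x * (U / D) + U * (1 - x) / (D * (1 - y)).
Proof. by move=> ha hD; field; rewrite ha hD. Qed.

Lemma qbR1 (N k : nat) : (k < N)%N ->
  qbinom N%:Z k.+1 * (1 - q ^+ k.+1) = qbinom N%:Z k * (1 - q ^+ (N - k)%N).
Proof.
move=> kN; rewrite !qbinomP kN ltnW // big_ord_recr /= big_ord_recr /=.
by rewrite genR1 // ?den_neq0 // onemq_neq0.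
Qed.

Lemma qbPascal (N k : nat) : (k.+1 <= N)%N ->
  qbinom N.+1%:Z k.+1 = q ^+ (N - k) * qbinom N%:Z k + qbinom N%:Z k.+1.
Proof.
move=> kN; rewrite !qbinomP kN ltnW // ltnW //.
rewrite big_ord_recl /= big_ord_recr /= big_ord_recr /=.
under eq_bigr => j _ do rewrite /bump /= add1n subSS.
rewrite subn0.
have -> : q ^+ N.+1 = q ^+ (N - k) * q ^+ k.+1 by rewrite -exprD addnS subnK // ltnW.
by rewrite genP // ?den_neq0 // onemq_neq0.
Qed.

Definition t (i : nat) := (i.+1 * i)./2.
Lemma tS i : t i.+1 = (t i + i.+1)%N.
Proof.
rewrite /t; have -> : (i.+2 * i.+1 = i.+1 * i + (i.+1).*2)%N by rewrite -muln2; lia.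
by rewrite halfD odd_double andbF add0n doubleK.
Qed.

Definition g (z : int) (i : nat) : Fq :=
  (-1) ^+ i * q ^ (- (t i)%:Z - i%:Z * z) * qbinom (i%:Z + z) i.
Definition gp (z : int) (i : nat) : Fq := if i is k.+1 then g z k else 0.

Lemma g_neg z i : z < 0 -> g z i = 0.
Proof. by move=> h; rewrite /g qbinom_neg // mulr0. Qed.
Lemma gp_neg z i : z < 0 -> gp z i = 0.
Proof. by case: i => //= i h; rewrite g_neg. Qed.
Lemma g_0 (M : nat) : g M 0 = 1.
Proof. by rewrite /g /= !big_ord0 divr1 mulr1 mul0r oppr0 subr0 expr0z expr0 mulr1. Qed.

Lemma E2 (M k : nat) :
  q ^+ M.+1 * (1 - q ^+ k.+1) * g M k.+1 = (q ^+ M.+1 - 1) * g M.+1 k.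
Proof.
rewrite /g.
have -> : (k.+1%:Z + M%:Z) = (k + M.+1)%N%:Z by lia.
have -> : (k%:Z + M.+1%:Z) = (k + M.+1)%N%:Z by lia.
have R := @qbR1 (k + M.+1) k ltac:(by rewrite addnS ltnS leq_addr).
rewrite addKn in R.
set e1 := (- (t k.+1)%:Z - k.+1%:Z * M%:Z).
have -> : (- (t k)%:Z - k%:Z * M.+1%:Z) = e1 + M.+1%:Z by rewrite /e1 tS; lia.
clearbody e1; rewrite expfzDr ?q_neq0 // -exprnP [(-1) ^+ k.+1]exprS.
move: R; move: (q ^ e1) (qbinom _ k.+1) (qbinom _ k) => Q B1 B0 R.
transitivity (- q^+M.+1 * (-1)^+k * Q * (B1 * (1-q^+k.+1))); first ring.
rewrite R; ring.
Qed.

Lemma E1 (M k : nat) : g M k.+1 = q ^+ k.+1 * g M.+1 k.+1 + g M.+1 k.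
Proof.
rewrite /g.
have -> : (k.+1%:Z + M%:Z) = (k + M.+1)%N%:Z by lia.
have -> : (k%:Z + M.+1%:Z) = (k + M.+1)%N%:Z by lia.
have -> : (k.+1%:Z + M.+1%:Z) = (k + M.+1).+1%N%:Z by lia.
rewrite qbPascal; last by rewrite addnS ltnS leq_addr.
rewrite addKn.
set eB := (- (t k.+1)%:Z - k.+1%:Z * M.+1%:Z).
have -> : (- (t k.+1)%:Z - k.+1%:Z * M%:Z) = eB + k.+1%:Z by rewrite /eB; lia.
have -> : (- (t k)%:Z - k%:Z * M.+1%:Z) = eB + k.+1%:Z + M.+1%:Z by rewrite /eB tS; lia.
rewrite !expfzDr ?q_neq0 // -!exprnP [(-1) ^+ k.+1]exprS.
ring.
Qed.

Lemma g0rel k : g 0 k = - q ^+ k.+1 * g 0 k.+1.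
Proof.
rewrite /g !addr0 !qbinom_nn !mulr0 !subr0 !mulr1.
have -> : (- (t k)%:Z) = - (t k.+1)%:Z + k.+1%:Z by rewrite tS; lia.
rewrite expfzDr ?q_neq0 // -!exprnP [(-1) ^+ k.+1]exprS.
ring.
Qed.

Lemma Tlem (z : int) (i : nat) : ~~ ((z == 1) && (i == 0%N)) ->
  q ^ z * (g (z - 1) i + gp (z - 1) i) = q ^ z * g (z - 2) i + (q ^ z - 1) * gp z i.
Proof.
case: z => [[|[|M]]|k] H.
- rewrite [g _ _]g_neg // [g _ _]g_neg // [gp _ _]gp_neg //.
  have -> : q ^ (Posz 0) = 1 by []. rewrite subrr; ring.
- case: i H => // k _ /=.
  rewrite [g (_ - 2) _]g_neg //.
  have -> : (Posz 1 - 1) = Posz 0 by [].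
  rewrite (g0rel k) -exprnP -E2; ring.
- have -> : (M.+2%:Z - 1) = M.+1%:Z by lia.
  have -> : (M.+2%:Z - 2) = M%:Z by lia.
  case: i H => [|k] _ /=; first by rewrite !g_0; ring.
  rewrite (E1 M k) -exprnP -E2; ring.
- rewrite !g_neg ?gp_neg //; ring.
Qed.

Definition P n : {poly Fq} := (1 - 'X) * (1 + 'X) ^+ n.

Lemma coef1X n j : ((1 + 'X : {poly Fq}) ^+ n)`_j = ('C(n, j))%:R.
Proof.
elim: n j => [|n IH] j.
  by rewrite expr0 coef1; case: j.
rewrite exprS mulrDl mul1r coefD coefXM IH; case: j => [|j] /=.
  by rewrite !bin0 addr0.
by rewrite IH binS natrD addrC.
Qed.

Lemma coefP n j : (P n)`_j = ('C(n, j))%:R - (if j is j'.+1 then ('C(n, j'))%:R else 0).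
Proof.
by rewrite /P mulrBl mul1r coefB coefXM !coef1X; case: j.
Qed.

Lemma PS n : P n.+1 = P n + P n * 'X.
Proof. by rewrite /P exprSr mulrA mulrDr mulr1. Qed.

Lemma sum_delta (F : nat -> Fq) x j :
  \sum_(a < j.+1) F a * (if (j - a)%N == 0%N then x else 0) = F j * x.
Proof.
rewrite big_ord_recr /= subnn eqxx big1 ?add0r // => a _.
by rewrite subn_eq0 leqNgt ltn_ord /= mulr0.
Qed.

Lemma CTform (P0 : {poly Fq}) c r (f : nat -> Fq) :
  CT (lmul (lmul (lmul (lpoly P0) (lconst c)) (lwinv r)) (lpower f))
  = c * \sum_(j < r.+1) P0`_j * f (r - j)%N.
Proof.
rewrite /CT /= !add0n addn0.
under eq_bigr => j _ do under eq_bigr => a _ do rewrite (sum_delta (fun b => P0`_b)).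
under eq_bigr => j _ do rewrite (sum_delta (fun a => P0`_a * c)).
rewrite mulr_sumr; apply: eq_bigr => j _; ring. Qed.

Lemma shiftsum (c : nat -> Fq) z r :
  \sum_(j < r.+1) c j * g z (r - j)%N = \sum_(j < r.+2) c j * gp z (r.+1 - j)%N.
Proof.
rewrite [RHS]big_ord_recr subnn /= mulr0 addr0; apply: eq_bigr => j _.
by rewrite subSn // -ltnS.
Qed.

Definition S n r := \sum_(j < r.+1) (P n)`_j * g (n%:Z - 2 * r%:Z) (r - j)%N.

Lemma Krec n r : let m := n%:Z - 2 * r%:Z in
  q ^ m * S n.+1 r.+1 = q ^ m * S n r.+1 + (q ^ m - 1) * S n r.
Proof.
move=> m; rewrite /S.
have -> : (n.+1%:Z - 2 * r.+1%:Z) = m - 1 by rewrite /m; lia.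
have -> : (n%:Z - 2 * r.+1%:Z) = m - 2 by rewrite /m; lia.
rewrite -/m.
have -> : \sum_(j < r.+2) (P n.+1)`_j * g (m - 1) (r.+1 - j)
  = \sum_(j < r.+2) (P n)`_j * (g (m - 1) (r.+1 - j) + gp (m - 1) (r.+1 - j)).
  rewrite PS; under eq_bigr => j _ do rewrite coefD mulrDl.
  rewrite big_split /=.
  under [in RHS]eq_bigr => j _ do rewrite mulrDr.
  rewrite [RHS]big_split /=; congr (_ + _).
  rewrite -(shiftsum (fun j => (P n)`_j)) big_ord_recl coefMX /= mul0r add0r.
  by apply: eq_bigr => j _; rewrite coefMX /bump /= add1n subSS.
rewrite (shiftsum _ m r).
rewrite !mulr_sumr -big_split /=; apply: eq_bigr => j _.
case: (boolP ((m == 1) && (r.+1 - j == 0)%N)) => [/andP[/eqP hm /eqP hi] | h].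
  have hj : (j : nat) = r.+1 by have := ltn_ord j; lia.
  have hn : n = (r.+1 + r)%N by move: hm; rewrite /m; lia.
  rewrite hj coefP.
  have -> : 'C(n, r) = 'C(n, r.+1).
    by rewrite -bin_sub; [congr 'C(_, _); lia | lia].
  by rewrite subrr !mul0r !mulr0 addr0.
transitivity ((P n)`_j * (q ^ m * (g (m - 1) (r.+1 - j) + gp (m - 1) (r.+1 - j)))); first ring.
by rewrite Tlem //; ring.
Qed.

Definition B n r := q ^ (r%:Z * (n%:Z - r%:Z)) * S n r.

Lemma qinv1 : q ^ (-1) * q = 1.
Proof.
have -> : (-1 : int) = - (Posz 1) by [].
by rewrite -invr_expz -exprnP expr1 mulVf // q_neq0.
Qed.

Lemma B_rec n r :
  B n.+1 r.+1 = q ^+ r.+1 * B n r.+1 + (q ^ (n%:Z - r%:Z) - q ^+ r) * B n r.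
Proof.
move: (Krec n r) => /= K.
rewrite /B.
set E := r%:Z * (n%:Z - r%:Z).
set m := n%:Z - 2 * r%:Z in K *.
have -> : (r.+1%:Z * (n.+1%:Z - r.+1%:Z)) = E + m + r%:Z by rewrite /E /m; nia.
have -> : (r.+1%:Z * (n%:Z - r.+1%:Z)) = E + m + (-1) by rewrite /E /m; nia.
have -> : n%:Z - r%:Z = m + r%:Z by rewrite /m; lia.
clearbody E m.
rewrite !expfzDr ?q_neq0 // -exprnP exprSr.
have := qinv1.
move: K.
move: (q ^ E) (q ^ m) (q ^ (-1)) (q ^+ r) (S n.+1 r.+1) (S n r.+1) (S n r) => QE QM Qi QR S1 S2 S3 K hi.
transitivity (QE * QR * (QM * S1)); first ring.
rewrite K.
transitivity (QR * QE * (Qi * q) * QM * S2 + (QM * QR - QR) * QE * S3); last ring.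
rewrite hi; ring.
Qed.

Lemma g_0' (z : int) : 0 <= z -> g z 0 = 1.
Proof. by case: z => // M _; rewrite g_0. Qed.

Lemma AB n r : A n r = B n r.
Proof.
elim: n r => [|n IH] [|r].
- rewrite /B /S big_ord1 coefP bin0 subr0.
  by rewrite /= subr0 mul1r subnn g_0 mulr1.
- rewrite /B /S big1 ?mulr0 // => j _.
  by rewrite g_neg ?mulr0 //; lia.
- rewrite /B /S big_ord1 coefP bin0 subr0.
  by rewrite /= subr0 mul1r subnn g_0' ?mulr1 //; lia.
- by rewrite /= !IH B_rec.
Qed.

Theorem lemma1 (n r : nat) :
  A n r =
  CT (lmul (lmul (lmul (lpoly ((1 - 'X) * (1 + 'X) ^+ n))
                        (lconst (q ^ (r%:Z * (n%:Z - r%:Z)))))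
                 (lwinv r))
           (lpower (fun i : nat =>
              (-1) ^+ i
              * q ^ (- ((i.+1 * i)./2)%:Z - i%:Z * (n%:Z - 2 * r%:Z))
              * qbinom (i%:Z + n%:Z - 2 * r%:Z) i))).
Proof.
rewrite AB CTform /B /S; congr (_ * _); apply: eq_bigr => j _.
by rewrite /g /t addrA.
Qed.
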